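(* Suppose $\widehat Z^\natural$ satisfies the average case incoherence condition with parameter $\mu_0$. Then for any two pairs $(j,k),(\alpha,\beta)\in[d]\times[n]$, $$\sqrt{\frac{w_k}{w_\beta}}\,\big|\langle\mathcal P_{\widehat T}(\widehat G_{j,k}),\widehat G_{\alpha,\beta}\rangle\big|\le\frac{3\mu_0 r}{n}.$$
   Context: Let $d\ge1$, $n$ odd, $n_1=n_2=(n+1)/2$. For $a\in[n]$, $w_a=\#\{(j,k)\in[n_1]\times[n_2]:j+k=a+1\}$, $G_a=w_a^{-1/2}\sum_{j+k=a+1}e_je_k^{\mathsf T}$. $F$ is the $d\times d$ unitary DFT matrix, $F_{ij}=d^{-1/2}e^{-2\pi\mathrm i(i-1)(j-1)/d}$. $\widehat G_{j,k}=\mathrm{diag}(F_{1j}G_k,\dots,F_{dj}G_k)$. Inner product $\langle A,B\rangle=\mathrm{tr}(AB^{\mathsf H})$. $\widehat Z^\natural=\mathrm{diag}(\widehat Z^\natural_a)$ with each block of rank $r$ and compact SVD $\widehat U_a\widehat\Sigma_a\widehat V_a^{\mathsf H}$; $\mathcal P_{\widehat T}$ acts blockwise on block diagonal matrices by $W_a\mapsto\widehat U_a\widehat U_a^{\mathsf H}W_a+W_a\widehat V_a\widehat V_a^{\mathsf H}-\widehat U_a\widehat U_a^{\mathsf H}W_a\widehat V_a\widehat V_a^{\mathsf H}$. Average case incoherence with parameter $\mu_0$: $\max_i\frac1d\sum_a\|e_i^{\mathsf T}\widehat U_a\|_2^2\le\mu_0r/n$ and $\max_j\frac1d\sum_a\|e_j^{\mathsf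 T}\widehat V_a\|_2^2\le\mu_0r/n$. *)

(* Defs.v *)
From HB Require Import structures.
From mathcomp Require Import all_boot all_order all_algebra.
From mathcomp Require Import algC.
Set Implicit Arguments. Unset Strict Implicit. Unset Printing Implicit Defensive.
Import Order.TTheory GRing.Theory Num.Theory.
Local Open Scope ring_scope.

Definition half_dim (n : nat) : nat := (n.+1)./2.

(* w_a (0-based a = paper's a - 1): #{(j,k) : j + k = a} with 0-based j,k
   (equivalently 1-based j + k = a + 1). *)
Definition wcount (m1 m2 a : nat) : nat :=
  #|[set p : 'I_m1 * 'I_m2 | (p.1 + p.2 == a)%N]|.

Definition Gmat (m1 m2 a : nat) : 'M[algC]_(m1, m2) :=
  \matrix_(i < m1, j < m2)
    (if (i + j == a)%N then (sqrtC (wcount m1 m2 a)%:R)^-1 else 0).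

(* e^{-2 pi i / d}: d.-root (-1) = e^{i pi / d} (minimal argument), so its
   square is e^{2 pi i/d}; take the complex conjugate. *)
Definition dft_omega (d : nat) : algC := ((d.-root (-1)) ^+ 2)^*.

(* unitary DFT matrix entry F_{ij} = d^{-1/2} e^{-2 pi i (i-1)(j-1)/d}
   (0-based indices i, j) *)
Definition dft (d : nat) (i j : 'I_d) : algC :=
  (sqrtC d%:R)^-1 * dft_omega d ^+ (i * j).

Definition adjmx (m p : nat) (A : 'M[algC]_(m, p)) : 'M[algC]_(p, m) :=
  (map_mx Num.conj A)^T.

(* A block diagonal matrix diag(W_1, ..., W_d) with n1 x n2 blocks is
   represented by its family of blocks W : 'I_d -> 'M_(n1,n2). *)

Definition Ghat (d m1 m2 : nat) (j : 'I_d) (a : nat) : 'I_d -> 'M[algC]_(m1, m2) :=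
  fun b => dft b j *: Gmat m1 m2 a.

(* <A, B> = tr(A B^H) for block diagonal matrices = sum of blockwise traces *)
Definition bdinner (d m1 m2 : nat) (A B : 'I_d -> 'M[algC]_(m1, m2)) : algC :=
  \sum_(b < d) \tr (A b *m adjmx (B b)).

Definition PT (d m1 m2 r : nat) (U : 'I_d -> 'M[algC]_(m1, r))
    (V : 'I_d -> 'M[algC]_(m2, r)) (W : 'I_d -> 'M[algC]_(m1, m2))
    : 'I_d -> 'M[algC]_(m1, m2) :=
  fun b =>
    let PU := U b *m adjmx (U b) in
    let PV := V b *m adjmx (V b) in
    PU *m W b + W b *m PV - PU *m W b *m PV.

Definition is_compact_svd (m1 m2 r : nat) (Z : 'M[algC]_(m1, m2))
    (U : 'M[algC]_(m1, r)) (S : 'M[algC]_r) (V : 'M[algC]_(m2, r)) : Prop :=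
  [/\ \rank Z = r,
      adjmx U *m U = 1%:M,
      adjmx V *m V = 1%:M
    & Z = U *m S *m adjmx V] /\
  [/\ is_diag_mx S,
      (forall i : 'I_r, 0 < S i i)
    & (forall i j : 'I_r, (i <= j)%N -> S j j <= S i i)].

Definition avg_incoherent (d n m1 m2 r : nat) (mu0 : algC)
    (U : 'I_d -> 'M[algC]_(m1, r)) (V : 'I_d -> 'M[algC]_(m2, r)) : Prop :=
  (forall i : 'I_m1,
      d%:R^-1 * (\sum_(a < d) \sum_(l < r) `|U a i l| ^+ 2) <= mu0 * r%:R / n%:R)
  /\
  (forall i : 'I_m2,
      d%:R^-1 * (\sum_(a < d) \sum_(l < r) `|V a i l| ^+ 2) <= mu0 * r%:R / n%:R).

(* Main.v *)
Require Import Defs.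
From HB Require Import structures.
From mathcomp Require Import all_boot all_order all_algebra.
From mathcomp Require Import algC.
From mathcomp Require Import ring zify.
Import Order.TTheory GRing.Theory Num.Theory.
Set Implicit Arguments. Unset Strict Implicit. Unset Printing Implicit Defensive.
Local Open Scope ring_scope.

Lemma amgm (x y : algC) : `|x * y| <= (`|x| ^+ 2 + `|y| ^+ 2) / 2%:R.
Proof.
have hr : `|x| - `|y| \is Num.real by rewrite rpredB // ger0_real.
move: hr; rewrite realEsqr => h.
rewrite normrM ler_pdivlMr ?ltr0n //.
rewrite -subr_ge0; apply: le_trans h _; rewrite le_eqVlt; apply/orP; left.
apply/eqP; ring.
Qed.

Lemma adjmxM m p q (A : 'M[algC]_(m, p)) (B : 'M[algC]_(p, q)) :
  adjmx (A *m B) = adjmx B *m adjmx A.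
Proof. by rewrite /adjmx map_mxM trmx_mul. Qed.

Lemma adjmxK m p (A : 'M[algC]_(m, p)) : adjmx (adjmx A) = A.
Proof. by apply/matrixP => i j; rewrite !mxE conjCK. Qed.

Lemma adjmxZ m p c (A : 'M[algC]_(m, p)) : adjmx (c *: A) = c^* *: adjmx A.
Proof. by apply/matrixP => i j; rewrite !mxE rmorphM. Qed.

Lemma adjmxE m p (A : 'M[algC]_(m, p)) i j : adjmx A i j = (A j i)^*.
Proof. by rewrite !mxE. Qed.

Definition nrm m r (W : 'M[algC]_(m, r)) (a : 'I_m) : algC :=
  \sum_(l < r) `|W a l| ^+ 2.

Lemma nrm_ge0 m r (W : 'M[algC]_(m, r)) a : 0 <= nrm W a.
Proof. by apply: sumr_ge0 => l _; rewrite exprn_ge0. Qed.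


Lemma proj_adj m r (W : 'M[algC]_(m, r)) :
  adjmx (W *m adjmx W) = W *m adjmx W.
Proof. by rewrite adjmxM adjmxK. Qed.

Lemma proj_idem m r (W : 'M[algC]_(m, r)) : adjmx W *m W = 1%:M ->
  (W *m adjmx W) *m adjmx (W *m adjmx W) = W *m adjmx W.
Proof.
move=> hW; rewrite proj_adj mulmxA -(mulmxA W) hW mulmx1 //.
Qed.

Lemma proj_sq m r (W : 'M[algC]_(m, r)) a : adjmx W *m W = 1%:M ->
  \sum_(p < m) `|(W *m adjmx W) a p| ^+ 2 = nrm W a.
Proof.
move=> hW.
have := congr1 (fun M : 'M[algC]_m => M a a) (proj_idem hW).
rewrite !mxE => h; rewrite /nrm.
have -> : \sum_(l < r) `|W a l| ^+ 2 = \sum_(l < r) W a l * adjmx W l a.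
  by apply: eq_bigr => l _; rewrite adjmxE normCK.
rewrite -h; apply: eq_bigr => p _; rewrite normCK adjmxE.
done.
Qed.

Lemma proj_conj m r (W : 'M[algC]_(m, r)) a p :
  (W *m adjmx W) p a = ((W *m adjmx W) a p)^*.
Proof.
have := congr1 (fun M : 'M[algC]_m => M p a) (proj_adj W).
by rewrite /= adjmxE => <-.
Qed.

Lemma proj_entry_le m r (W : 'M[algC]_(m, r)) a p :
  `|(W *m adjmx W) a p| <= (nrm W a + nrm W p) / 2%:R.
Proof.
rewrite mxE; apply: le_trans (ler_norm_sum _ _ _) _.
rewrite /nrm -big_split /= mulr_suml; apply: ler_sum => l _.
by rewrite adjmxE -(norm_conjC (W p l)); apply: amgm.
Qed.

Lemma line_le (I : finType) (c : pred I) (G : I -> algC) (B : algC) :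
  0 <= B ->
  (forall p p', c p -> c p' -> p = p') ->
  (forall p, ~~ c p -> G p = 0) ->
  (forall p, c p -> G p <= B) ->
  \sum_(p : I) G p <= B.
Proof.
move=> hB hu hz hle.
case: (pickP c) => [p0 cp0 | none].
  rewrite (bigD1 p0) //= big1 ?addr0; first exact: hle.
  move=> p /= np; apply: hz; apply/negP => cp.
  by rewrite (hu _ _ cp cp0) eqxx in np.
by rewrite big1 // => p _; apply: hz; rewrite none.
Qed.

Definition Jm m k : 'M[algC]_m := \matrix_(i, j) (if (i + j == k)%N then 1 else 0).
Definition sc m k : algC := (sqrtC (wcount m m k)%:R)^-1.

Lemma Gmat_J m k : Gmat m m k = sc m k *: Jm m k.
Proof.
apply/matrixP => i j; rewrite !mxE /sc.
by case: ifP => _; rewrite ?mulr1 ?mulr0.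
Qed.

Definition Xm m (PU PV : 'M[algC]_m) k :=
  PU *m Jm m k + Jm m k *m PV - PU *m Jm m k *m PV.

Lemma PT_Ghat m d r (U V : 'I_d -> 'M[algC]_(m, r)) (j : 'I_d) k b :
  PT U V (Ghat m m j k) b =
  (dft b j * sc m k) *: Xm (U b *m adjmx (U b)) (V b *m adjmx (V b)) k.
Proof.
rewrite /PT /Ghat Gmat_J scalerA /Xm.
by rewrite -!scalemxAr -!scalemxAl -scalerDr -scalerBr.
Qed.

Lemma tr_J m (X : 'M[algC]_m) b :
  \tr (X *m adjmx (Jm m b)) =
  \sum_(a < m) \sum_(q < m) (if (a + q == b)%N then X a q else 0).
Proof.
apply: eq_bigr => a _; rewrite mxE; apply: eq_bigr => q _.
rewrite adjmxE mxE; case: ifP => _.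
  by rewrite rmorph1 mulr1.
by rewrite rmorph0 mulr0.
Qed.

Definition Eg m (N1 N2 : 'I_m -> algC) k (a q' : 'I_m) : algC :=
  \sum_(p < m) (if (p + q' == k)%N then (N1 a + N1 p) / 2%:R else 0)
 + \sum_(q < m) (if (a + q == k)%N then (N2 q + N2 q') / 2%:R else 0)
 + (N1 a + N2 q') / 2%:R.

Lemma half_ge0 (x : algC) : 0 <= x -> 0 <= x / 2%:R.
Proof. by move=> h; rewrite divr_ge0 ?ler0n. Qed.

Lemma Xm_le_gen m (PU PV : 'M[algC]_m) (N1 N2 : 'I_m -> algC) k a q' :
  (forall a, \sum_(p < m) `|PU a p| ^+ 2 = N1 a) ->
  (forall a, \sum_(p < m) `|PV a p| ^+ 2 = N2 a) ->
  (forall a p, `|PU a p| <= (N1 a + N1 p) / 2%:R) ->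
  (forall a p, `|PV a p| <= (N2 a + N2 p) / 2%:R) ->
  (forall a p, PV p a = (PV a p)^*) ->
  `|Xm PU PV k a q' | <= Eg N1 N2 k a q'.
Proof.
move=> hs1 hs2 he1 he2 hc2; rewrite /Xm /Eg /Jm.
rewrite !mxE.
apply: le_trans (ler_normB _ _) _; apply: lerD; first apply: le_trans (ler_normD _ _) _.
apply: lerD.
- apply: le_trans (ler_norm_sum _ _ _) _; apply: ler_sum => p _; rewrite mxE.
  by case: ifP => _; [rewrite mulr1; exact: he1 | rewrite mulr0 normr0].
- apply: le_trans (ler_norm_sum _ _ _) _; apply: ler_sum => q _; rewrite mxE.
  by case: ifP => _; [rewrite mul1r; exact: he2 | rewrite mul0r normr0].
apply: le_trans (ler_norm_sum _ _ _) _.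
apply: (@le_trans _ _ (\sum_(q < m) \sum_(p < m)
   (if (p + q == k)%N then (`|PU a p| ^+ 2 + `|PV q q'| ^+ 2) / 2%:R else 0))).
  apply: ler_sum => q _. rewrite mxE mulr_suml.
  apply: le_trans (ler_norm_sum _ _ _) _; apply: ler_sum => p _; rewrite mxE.
  case: ifP => _; last by rewrite mulr0 mul0r normr0.
  by rewrite mulr1 amgm.
have -> : \sum_(q < m) \sum_(p < m)
   (if (p + q == k)%N then (`|PU a p| ^+ 2 + `|PV q q'| ^+ 2) / 2%:R else 0)
   = \sum_(q < m) (\sum_(p < m) (if (p + q == k)%N then `|PU a p| ^+ 2 / 2%:R else 0)
   + \sum_(p < m) (if (p + q == k)%N then `|PV q q'| ^+ 2 / 2%:R else 0)).
  apply: eq_bigr => q _; rewrite -big_split; apply: eq_bigr => p _.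
  by case: ifP => _ /=; rewrite ?addr0 // mulrDl.
rewrite big_split /= mulrDl; apply: lerD.
  rewrite exchange_big /= -hs1 mulr_suml; apply: ler_sum => p _.
  apply: (@line_le _ (fun q : 'I_m => (p + q == k)%N) (fun q : 'I_m => if (p + q == k)%N then `|PU a p| ^+ 2 / 2%:R else 0)).
  - by apply: half_ge0; rewrite exprn_ge0.
  - by move=> x y /eqP hx /eqP hy; apply: val_inj => /=; lia.
  - by move=> q /negbTE ->.
  - by move=> q ->.
rewrite -hs2 mulr_suml; apply: ler_sum => q _.
apply: (@line_le _ (fun p : 'I_m => (p + q == k)%N) (fun p : 'I_m => if (p + q == k)%N then `|PV q q'| ^+ 2 / 2%:R else 0)).
- by apply: half_ge0; rewrite exprn_ge0.
- by move=> x y /eqP hx /eqP hy; apply: val_inj => /=; lia.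
- by move=> p /negbTE ->.
- by move=> p ->; rewrite hc2 norm_conjC.
Qed.

Lemma Xm_le m r (W1 W2 : 'M[algC]_(m, r)) k a q' :
  adjmx W1 *m W1 = 1%:M -> adjmx W2 *m W2 = 1%:M ->
  `|Xm (W1 *m adjmx W1) (W2 *m adjmx W2) k a q' | <= Eg (nrm W1) (nrm W2) k a q'.
Proof.
move=> h1 h2; apply: Xm_le_gen.
- by move=> x; apply: proj_sq.
- by move=> x; apply: proj_sq.
- by move=> x y; apply: proj_entry_le.
- by move=> x y; apply: proj_entry_le.
- by move=> x y; apply: proj_conj.
Qed.

Lemma dft_norm d (b j : 'I_d) : (0 < d)%N -> `|dft b j| = (sqrtC d%:R)^-1.
Proof.
move=> hd; rewrite /dft /dft_omega normrM normfV normrX norm_conjC normrX.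
rewrite !norm_rootC normrN1 rootC1 // !expr1n mulr1 normr_nat. all: try done.
Qed.

Lemma sc_ge0 m k : 0 <= sc m k.
Proof. by rewrite /sc invr_ge0 sqrtC_ge0 ler0n. Qed.

Lemma wpos n (a : 'I_n) : odd n -> (0 < wcount (half_dim n) (half_dim n) a)%N.
Proof.
move=> hn; rewrite /wcount /half_dim.
set m := (n.+1)./2.
have h2 : (n.+1 = m.*2)%N.
  by rewrite /m -{1}(odd_double_half n.+1) /= hn.
have ha := ltn_ord a.
set x := minn a m.-1.
have hx : (x < m)%N by rewrite /x; lia.
have hy : (a - x < m)%N by rewrite /x; lia.
apply/card_gt0P; exists (Ordinal hx, Ordinal hy); rewrite inE /= /x; apply/eqP; lia.
Qed.

Lemma count_sum m b (C : algC) :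
  \sum_(a < m) \sum_(q < m) (if (a + q == b)%N then C else 0)
  = (wcount m m b)%:R * C.
Proof.
rewrite pair_big /= /wcount.
rewrite (eq_bigr (fun p : 'I_m * 'I_m =>
  if p \in [set p : 'I_m * 'I_m | (p.1 + p.2 == b)%N] then C else 0)); last first.
  by move=> p _; rewrite inE.
by rewrite -big_mkcond /= sumr_const mulr_natl.
Qed.

Lemma half_sum I (s : seq I) (x y : I -> algC) (B : algC) :
  \sum_(i <- s) x i <= B -> \sum_(i <- s) y i <= B ->
  \sum_(i <- s) (x i + y i) / 2%:R <= B.
Proof.
move=> h1 h2; rewrite -mulr_suml big_split /=.
have -> : B = (B + B) / 2%:R by field.
by rewrite ler_pM2r ?invr_gt0 ?ltr0n // lerD.
Qed.

Lemma Eg_avg d m (N1 N2 : 'I_d -> 'I_m -> algC) (B : algC) k a q' :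
  0 <= B ->
  (forall i, \sum_(b < d) N1 b i <= B) ->
  (forall i, \sum_(b < d) N2 b i <= B) ->
  \sum_(b < d) Eg (N1 b) (N2 b) k a q' <= 3%:R * B.
Proof.
move=> hB h1 h2; rewrite /Eg big_split big_split /=.
have -> : 3%:R * B = B + B + B by ring.
apply: lerD; first apply: lerD.
- rewrite exchange_big /=.
  apply: (@line_le _ (fun p : 'I_m => (p + q' == k)%N)
    (fun p => \sum_(b < d) (if (p + q' == k)%N then (N1 b a + N1 b p) / 2%:R else 0))).
  + exact: hB.
  + by move=> x y /eqP hx /eqP hy; apply: val_inj => /=; lia.
  + by move=> p /negbTE hp; rewrite big1 // => b _; rewrite hp.
  + by move=> p hp; under eq_bigr => b _ do rewrite hp; apply: half_sum.
- rewrite exchange_big /=.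
  apply: (@line_le _ (fun q : 'I_m => (a + q == k)%N)
    (fun q => \sum_(b < d) (if (a + q == k)%N then (N2 b q + N2 b q') / 2%:R else 0))).
  + exact: hB.
  + by move=> x y /eqP hx /eqP hy; apply: val_inj => /=; lia.
  + by move=> p /negbTE hp; rewrite big1 // => b _; rewrite hp.
  + by move=> p hp; under eq_bigr => b _ do rewrite hp; apply: half_sum.
- by apply: half_sum.
Qed.

Lemma bdinner_eq m d r (U V : 'I_d -> 'M[algC]_(m, r)) (j al : 'I_d) k be :
  bdinner (PT U V (Ghat m m j k)) (Ghat m m al be) =
  \sum_(b < d) ((dft b j * sc m k) * (dft b al * sc m be)^* *
     \tr (Xm (U b *m adjmx (U b)) (V b *m adjmx (V b)) k *m adjmx (Jm m be))).
Proof.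
apply: eq_bigr => b _.
rewrite PT_Ghat /Ghat Gmat_J scalerA adjmxZ -scalemxAl -scalemxAr !mxtraceZ.
by rewrite mulrA.
Qed.

Unset Implicit Arguments.

Theorem lemma6p3 (d n r : nat) (mu0 : algC)
    (Z : 'I_d -> 'M[algC]_(half_dim n, half_dim n))
    (U V : 'I_d -> 'M[algC]_(half_dim n, r))
    (S : 'I_d -> 'M[algC]_r) :
  (0 < d)%N -> odd n ->
  (forall a : 'I_d, is_compact_svd (Z a) (U a) (S a) (V a)) ->
  avg_incoherent n mu0 U V ->
  forall (j alpha : 'I_d) (k beta : 'I_n),
    sqrtC ((wcount (half_dim n) (half_dim n) k)%:R
           / (wcount (half_dim n) (half_dim n) beta)%:R)
    * `|bdinner (PT U V (Ghat (half_dim n) (half_dim n) j k))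
                (Ghat (half_dim n) (half_dim n) alpha beta)|
    <= 3%:R * mu0 * r%:R / n%:R.
Proof.
move=> hd hn hsvd [hU hV] j al k be.
rewrite bdinner_eq.
set m := half_dim n in U V Z hU hV hsvd *.
have hU1 b : adjmx (U b) *m U b = 1%:M by case: (hsvd b) => [[_ ? _ _] _].
have hV1 b : adjmx (V b) *m V b = 1%:M by case: (hsvd b) => [[_ _ ? _] _].
set mu := mu0 * r%:R / n%:R in hU hV *.
have hdR : (0 : algC) < d%:R by rewrite ltr0n.
have hm : (0 < m)%N.
  have h2 : (n.+1 = m.*2)%N.
    by rewrite /m /half_dim -{1}(odd_double_half n.+1) /= hn.
  lia.
have hmu : 0 <= mu.
  apply: le_trans (hU (Ordinal hm)).
  by rewrite mulr_ge0 ?invr_ge0 ?ler0n // sumr_ge0 // => b _; apply: nrm_ge0.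
have hA : forall i, \sum_(b < d) nrm (U b) i <= d%:R * mu.
  move=> i; have := hU i; rewrite -(ler_pM2l hdR) mulrA mulfV ?mul1r //.
  by rewrite gt_eqF.
have hB : forall i, \sum_(b < d) nrm (V b) i <= d%:R * mu.
  move=> i; have := hV i; rewrite -(ler_pM2l hdR) mulrA mulfV ?mul1r //.
  by rewrite gt_eqF.
have hdmu : 0 <= d%:R * mu by rewrite mulr_ge0 ?ler0n.
set T := fun b : 'I_d => \tr (Xm (U b *m adjmx (U b)) (V b *m adjmx (V b)) k
   *m adjmx (Jm m be)).
have hT : \sum_(b < d) `|T b| <= (wcount m m be)%:R * (3%:R * (d%:R * mu)).
  rewrite -count_sum.
  apply: (@le_trans _ _ (\sum_(b < d) \sum_(a < m) \sum_(q < m)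
     (if (a + q == be)%N then Eg (nrm (U b)) (nrm (V b)) k a q else 0))).
    apply: ler_sum => b _; rewrite /T tr_J.
    apply: le_trans (ler_norm_sum _ _ _) _; apply: ler_sum => a _.
    apply: le_trans (ler_norm_sum _ _ _) _; apply: ler_sum => q _.
    by case: ifP => _; [apply: Xm_le | rewrite normr0].
  rewrite exchange_big; apply: ler_sum => a _.
  rewrite exchange_big; apply: ler_sum => q _.
  case: ifP => _; last by rewrite big1.
  exact: Eg_avg.
have hf : forall b : 'I_d,
   `|dft b j * sc m k * (dft b al * sc m be)^* * T b|
   = d%:R^-1 * (sc m k * sc m be) * `|T b|.
  move=> b.
  have gen : forall x y z w t : algC,
    `|x * y * (z * w)^* * t| = `|x| * `|y| * (`|z| * `|w|) * `|t|.
    by move=> x y z w t; rewrite !normrM norm_conjC normrM.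
  rewrite gen !dft_norm // (ger0_norm (sc_ge0 m k)) (ger0_norm (sc_ge0 m be)).
  have -> : (d%:R : algC)^-1 = (sqrtC d%:R)^-1 * (sqrtC d%:R)^-1.
    by rewrite -invfM -expr2 sqrtCK.
  ring.
apply: (@le_trans _ _ (sqrtC ((wcount m m k)%:R / (wcount m m be)%:R) *
   (d%:R^-1 * (sc m k * sc m be) * ((wcount m m be)%:R * (3%:R * (d%:R * mu)))))).
  apply: ler_wpM2l; first by rewrite sqrtC_ge0 divr_ge0 ?ler0n.
  apply: le_trans (ler_norm_sum _ _ _) _.
  under eq_bigr => b _ do rewrite hf.
  rewrite -mulr_sumr; apply: ler_wpM2l => //.
  by rewrite mulr_ge0 ?invr_ge0 ?ler0n ?mulr_ge0 ?sc_ge0.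
have wk := wpos k hn; have wb := wpos be hn.
rewrite -/m in wk wb.
set wK := (wcount m m k)%:R : algC.
set wB := (wcount m m be)%:R : algC.
have hK : 0 <= wK by rewrite ler0n.
have hBB : 0 <= wB by rewrite ler0n.
have sK : sqrtC wK != 0 by rewrite sqrtC_eq0 pnatr_eq0 -lt0n.
have sB : sqrtC wB != 0 by rewrite sqrtC_eq0 pnatr_eq0 -lt0n.
have -> : sqrtC (wK / wB) = sqrtC wK / sqrtC wB.
  rewrite -[RHS]sqrCK; last by rewrite divr_ge0 ?sqrtC_ge0.
  by rewrite expr_div_n !sqrtCK.
rewrite /sc -/wK -/wB le_eqVlt; apply/orP; left; apply/eqP.
have -> : wB * (3%:R * (d%:R * mu)) = sqrtC wB ^+ 2 * (3%:R * (d%:R * mu)).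
  by rewrite sqrtCK.
rewrite /mu.
field.
apply/and4P; split => //.
  by rewrite pnatr_eq0; case: (n) hn.
by rewrite pnatr_eq0 -lt0n.
Qed.
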